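(* There is a function $F:[1,\infty)\to[1,\infty)$ such that the following holds. Let $G$ be a finite connected unweighted graph with its graph distance, and suppose $\tau:V(G)\to X$ is a bilipschitz embedding of distortion $D$ into a finite-dimensional Banach space $X$. Then for every infinite-dimensional Banach space $Z$ containing $X$ as a subspace, the thickening $TG$ admits a bilipschitz embedding $f:TG\to Z$ with distortion at most $F(D)$.
   Context: The thickening $TG$ of a graph $G$: for each edge $uv$ of $G$ join $u$ and $v$ by a set $t(uv)$ isometric to $[0,1]$ (different such sets meet only at common endpoints); $TG$ is the union of all $t(uv)$, with the distance between two points defined as the length of the shortest curve in $TG$ joining them. A bilipschitz embedding has distortion $C$ if $C$ is the least constant such that $r d(u,v)\le d(f(u),f(v))\le rC d(u,v)$ for some $r>0$. *)

(* Defs.v *)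
From Stdlib Require Import Reals Lra List Classical ClassicalEpsilon.
Open Scope R_scope.

Record NormedSpace := mkNS {
  ns_car :> Type;
  ns_zero : ns_car;
  ns_add : ns_car -> ns_car -> ns_car;
  ns_opp : ns_car -> ns_car;
  ns_scal : R -> ns_car -> ns_car;
  ns_norm : ns_car -> R;
  ns_add_assoc : forall x y z, ns_add x (ns_add y z) = ns_add (ns_add x y) z;
  ns_add_comm : forall x y, ns_add x y = ns_add y x;
  ns_add_zero : forall x, ns_add x ns_zero = x;
  ns_add_opp : forall x, ns_add x (ns_opp x) = ns_zero;
  ns_scal_one : forall x, ns_scal 1 x = x;
  ns_scal_assoc : forall a b x, ns_scal a (ns_scal b x) = ns_scal (a * b) x;
  ns_scal_distr_l : forall a x y, ns_scal a (ns_add x y) = ns_add (ns_scal a x) (ns_scal a y);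
  ns_scal_distr_r : forall a b x, ns_scal (a + b) x = ns_add (ns_scal a x) (ns_scal b x);
  ns_norm_eq0 : forall x, ns_norm x = 0 -> x = ns_zero;
  ns_norm_scal : forall a x, ns_norm (ns_scal a x) = Rabs a * ns_norm x;
  ns_norm_triangle : forall x y, ns_norm (ns_add x y) <= ns_norm x + ns_norm y
}.

Definition ns_dist (X : NormedSpace) (x y : X) : R :=
  ns_norm X (ns_add X x (ns_opp X y)).

Definition complete (X : NormedSpace) : Prop :=
  forall u : nat -> X,
    (forall eps, 0 < eps -> exists N, forall m n, (N <= m)%nat -> (N <= n)%nat ->
        ns_dist X (u m) (u n) < eps) ->
    exists l : X, forall eps, 0 < eps -> exists N, forall n, (N <= n)%nat ->
        ns_dist X (u n) l < eps.

Definition Banach (X : NormedSpace) : Prop := complete X.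

Definition lincomb (X : NormedSpace) (lc : list (R * X)) : X :=
  fold_right (fun p acc => ns_add X (ns_scal X (fst p) (snd p)) acc) (ns_zero X) lc.

Definition finite_dimensional (X : NormedSpace) : Prop :=
  exists basis : list X, forall x : X,
    exists lc : list (R * X), (forall p, In p lc -> In (snd p) basis) /\ x = lincomb X lc.

Definition infinite_dimensional (X : NormedSpace) : Prop := ~ finite_dimensional X.

Definition is_subspace_of (X Z : NormedSpace) : Prop :=
  exists j : X -> Z,
    (forall x y, j (ns_add X x y) = ns_add Z (j x) (j y)) /\
    (forall a x, j (ns_scal X a x) = ns_scal Z a (j x)) /\
    (forall x, ns_norm Z (j x) = ns_norm X x).

Definition distortion_le {A B : Type} (dA : A -> A -> R) (dB : B -> B -> R)
  (f : A -> B) (C : R) : Prop :=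
  exists r, 0 < r /\ forall x y, r * dA x y <= dB (f x) (f y) <= r * C * dA x y.

Definition has_distortion {A B : Type} (dA : A -> A -> R) (dB : B -> B -> R)
  (f : A -> B) (D : R) : Prop :=
  distortion_le dA dB f D /\ (forall C, distortion_le dA dB f C -> D <= C).

Inductive walk {V : Type} (adj : V -> V -> Prop) : V -> V -> nat -> Prop :=
| walk_nil : forall u, walk adj u u 0
| walk_cons : forall u v w n, adj u v -> walk adj v w n -> walk adj u w (S n).

Definition finite_type (V : Type) : Prop := exists l : list V, forall v, In v l.

Definition simple_graph {V : Type} (adj : V -> V -> Prop) : Prop :=
  (forall u v, adj u v -> adj v u) /\ (forall u, ~ adj u u).

Definition connected {V : Type} (adj : V -> V -> Prop) : Prop :=
  forall u v, exists n, walk adj u v n.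

Definition gdist {V : Type} (adj : V -> V -> Prop) (u v : V) : nat :=
  epsilon (inhabits 0%nat)
    (fun n => walk adj u v n /\ forall m, walk adj u v m -> (n <= m)%nat).

Definition gdistR {V : Type} (adj : V -> V -> Prop) (u v : V) : R :=
  INR (gdist adj u v).

(* A point of TG is given by an edge (a, b) and a position t in [0,1]:
   it is the point of t(ab) at distance t from a.  (Several triples may
   represent the same point; the distance below is then 0 between them.) *)
Record TPoint {V : Type} (adj : V -> V -> Prop) := mkTP {
  tp_a : V; tp_b : V; tp_edge : adj tp_a tp_b;
  tp_t : R; tp_t_range : 0 <= tp_t <= 1 }.
Arguments tp_a {V adj}. Arguments tp_b {V adj}. Arguments tp_t {V adj}.

Definition Rmin4 (a b c d : R) : R := Rmin (Rmin a b) (Rmin c d).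

(* Length of a shortest curve in TG between p and q: either go directly
   inside a common edge, or leave p's edge through one endpoint, travel
   a shortest path of G, and enter q's edge through one of its endpoints. *)
Definition tdist {V : Type} (adj : V -> V -> Prop) (p q : TPoint adj) : R :=
  let s := tp_t p in let t := tp_t q in
  let via := Rmin4
     (s + gdistR adj (tp_a p) (tp_a q) + t)
     (s + gdistR adj (tp_a p) (tp_b q) + (1 - t))
     ((1 - s) + gdistR adj (tp_b p) (tp_a q) + t)
     ((1 - s) + gdistR adj (tp_b p) (tp_b q) + (1 - t)) in
  if excluded_middle_informative (tp_a p = tp_a q /\ tp_b p = tp_b q)
  then Rmin via (Rabs (s - t))
  else if excluded_middle_informative (tp_a p = tp_b q /\ tp_b p = tp_a q)
  then Rmin via (Rabs (s - (1 - t)))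
  else via.

(* Main.v *)
Require Import Defs.
From Stdlib Require Import Reals Lra List Lia ZArith Classical ClassicalEpsilon.
Open Scope R_scope.


Lemma v_add0l (X : NormedSpace) x : ns_add X (ns_zero X) x = x.
Proof. rewrite ns_add_comm; apply ns_add_zero. Qed.

Lemma v_scal0 (X : NormedSpace) x : ns_scal X 0 x = ns_zero X.
Proof.
  assert (H : ns_add X (ns_scal X 0 x) (ns_scal X 0 x) = ns_scal X 0 x).
  { rewrite <- ns_scal_distr_r. f_equal; ring. }
  assert (H2 := f_equal (fun y => ns_add X y (ns_opp X (ns_scal X 0 x))) H).
  simpl in H2. rewrite <- ns_add_assoc, !ns_add_opp, ns_add_zero in H2. exact H2.
Qed.

Lemma v_opp_scal (X : NormedSpace) x : ns_opp X x = ns_scal X (-1) x.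
Proof.
  assert (H : ns_add X x (ns_scal X (-1) x) = ns_zero X).
  { rewrite <- (ns_scal_one X x) at 1. rewrite <- ns_scal_distr_r.
    replace (1 + -1) with 0 by ring. apply v_scal0. }
  transitivity (ns_add X (ns_opp X x) (ns_add X x (ns_scal X (-1) x))).
  - rewrite H, ns_add_zero; auto.
  - rewrite ns_add_assoc, (ns_add_comm X (ns_opp X x)), ns_add_opp, v_add0l; auto.
Qed.

Lemma v_scalz (X : NormedSpace) a : ns_scal X a (ns_zero X) = ns_zero X.
Proof. rewrite <- (v_scal0 X (ns_zero X)), ns_scal_assoc. f_equal; ring. Qed.

Inductive vexpr := VAtom (n : nat) | VZero | VAdd (a b : vexpr) | VOpp (a : vexpr)
  | VScal (r : R) (a : vexpr).

Fixpoint vden (X : NormedSpace) (env : list X) (e : vexpr) : X :=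
  match e with
  | VAtom n => nth n env (ns_zero X)
  | VZero => ns_zero X
  | VAdd a b => ns_add X (vden X env a) (vden X env b)
  | VOpp a => ns_opp X (vden X env a)
  | VScal r a => ns_scal X r (vden X env a)
  end.

Fixpoint vcoef (e : vexpr) (i : nat) : R :=
  match e with
  | VAtom n => if Nat.eqb n i then 1 else 0
  | VZero => 0
  | VAdd a b => vcoef a i + vcoef b i
  | VOpp a => - vcoef a i
  | VScal r a => r * vcoef a i
  end.

Fixpoint lsum (X : NormedSpace) (k : nat) (env : list X) (c : nat -> R) : X :=
  match env with
  | nil => ns_zero X
  | v :: env' => ns_add X (ns_scal X (c k) v) (lsum X (S k) env' c)
  end.

Lemma lsum_ext X env : forall k c1 c2, (forall i, (k <= i < k + length env)%nat -> c1 i = c2 i) ->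
  lsum X k env c1 = lsum X k env c2.
Proof.
  induction env as [|v env IH]; intros k c1 c2 H; simpl; auto.
  simpl in H. rewrite (H k) by lia. f_equal. apply IH. intros; apply H; lia.
Qed.

Lemma v_add_swap (X : NormedSpace) a b c d :
  ns_add X (ns_add X a b) (ns_add X c d) = ns_add X (ns_add X a c) (ns_add X b d).
Proof.
  rewrite <- !ns_add_assoc. f_equal. rewrite !ns_add_assoc. f_equal. apply ns_add_comm.
Qed.

Lemma lsum_zero X env : forall k c, (forall i, c i = 0) -> lsum X k env c = ns_zero X.
Proof.
  induction env; intros k c H; simpl; auto.
  rewrite H, v_scal0, IHenv, ns_add_zero; auto.
Qed.

Lemma lsum_add X env : forall k c1 c2,
  lsum X k env (fun i => c1 i + c2 i) = ns_add X (lsum X k env c1) (lsum X k env c2).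
Proof.
  induction env; intros; simpl. rewrite ns_add_zero; auto.
  rewrite IHenv, ns_scal_distr_r, v_add_swap; auto.
Qed.

Lemma lsum_scal X env : forall k r c,
  lsum X k env (fun i => r * c i) = ns_scal X r (lsum X k env c).
Proof.
  induction env; intros; simpl. rewrite v_scalz; auto.
  rewrite IHenv, ns_scal_distr_l, ns_scal_assoc; auto.
Qed.

Lemma lsum_atom X env : forall k n,
  lsum X k env (fun i => if Nat.eqb n i then 1 else 0) =
  if Nat.leb k n then nth (n - k) env (ns_zero X) else ns_zero X.
Proof.
  induction env as [|v env IH]; intros; simpl.
  - destruct (Nat.leb k n); [destruct (n-k)%nat|]; auto.
  - rewrite IH. destruct (Nat.eqb n k) eqn:E.
    + apply Nat.eqb_eq in E; subst. rewrite ns_scal_one.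
      replace (Nat.leb (S k) k) with false by (symmetry; apply Nat.leb_gt; lia).
      rewrite Nat.leb_refl, Nat.sub_diag. apply ns_add_zero.
    + apply Nat.eqb_neq in E. rewrite v_scal0, v_add0l.
      destruct (Nat.leb (S k) n) eqn:E1.
      * apply Nat.leb_le in E1. replace (Nat.leb k n) with true by (symmetry; apply Nat.leb_le; lia).
        replace (n - k)%nat with (S (n - S k)) by lia. auto.
      * apply Nat.leb_gt in E1. replace (Nat.leb k n) with false by (symmetry; apply Nat.leb_gt; lia). auto.
Qed.

Lemma vden_lsum X env e : vden X env e = lsum X 0 env (vcoef e).
Proof.
  induction e; simpl.
  - rewrite lsum_atom. simpl. rewrite Nat.sub_0_r; auto.
  - symmetry; apply lsum_zero; auto.
  - rewrite lsum_add, IHe1, IHe2; auto.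
  - rewrite IHe, v_opp_scal, <- lsum_scal. apply lsum_ext. intros; ring.
  - rewrite lsum_scal, IHe; auto.
Qed.

Lemma vden_sound X env e1 e2 :
  map (vcoef e1) (seq 0 (length env)) = map (vcoef e2) (seq 0 (length env)) ->
  vden X env e1 = vden X env e2.
Proof.
  intro H. rewrite !vden_lsum. apply lsum_ext. simpl. intros i Hi.
  assert (Hn : In i (seq 0 (length env))) by (apply in_seq; lia).
  revert H Hn. generalize (seq 0 (length env)). induction l; simpl; intros H Hn; [tauto|].
  injection H; intros. destruct Hn; subst; auto.
Qed.

Lemma cons_eqR (x y : R) l l' : x = y -> l = l' -> x :: l = y :: l'.
Proof. intros; subst; auto. Qed.

Ltac vmem x l :=
  match l with
  | nil => constr:(false)
  | x :: _ => constr:(true)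
  | _ :: ?l' => vmem x l'
  end.

Ltac vcollect X t env :=
  match t with
  | ns_add X ?a ?b => let env1 := vcollect X a env in vcollect X b env1
  | ns_opp X ?a => vcollect X a env
  | ns_scal X _ ?a => vcollect X a env
  | ns_zero X => env
  | _ => let b := vmem t env in
         match b with true => env | false => constr:(t :: env) end
  end.

Ltac vindex x l :=
  match l with
  | x :: _ => constr:(O)
  | _ :: ?l' => let n := vindex x l' in constr:(S n)
  end.

Ltac vreify X t env :=
  match t with
  | ns_add X ?a ?b => let ra := vreify X a env in let rb := vreify X b env in constr:(VAdd ra rb)
  | ns_opp X ?a => let ra := vreify X a env in constr:(VOpp ra)
  | ns_scal X ?r ?a => let ra := vreify X a env in constr:(VScal r ra)
  | ns_zero X => constr:(VZero)
  | _ => let n := vindex t env in constr:(VAtom n)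
  end.

Ltac veq :=
  match goal with
  | |- @eq (ns_car ?X) ?a ?b =>
    let env0 := vcollect X a (@nil (ns_car X)) in
    let env := vcollect X b env0 in
    let ra := vreify X a env in
    let rb := vreify X b env in
    change (vden X env ra = vden X env rb);
    apply vden_sound; cbn [vcoef map seq length Nat.eqb];
    repeat (apply cons_eqR; [try ring|]); try reflexivity
  end.



Notation vsub X x y := (ns_add X x (ns_opp X y)).

Lemma norm_zero (X : NormedSpace) : ns_norm X (ns_zero X) = 0.
Proof. rewrite <- (v_scalz X 0), ns_norm_scal, Rabs_R0; ring. Qed.

Lemma norm_opp (X : NormedSpace) x : ns_norm X (ns_opp X x) = ns_norm X x.
Proof. rewrite v_opp_scal, ns_norm_scal, Rabs_left by lra; ring. Qed.

Lemma norm_nonneg (X : NormedSpace) x : 0 <= ns_norm X x.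
Proof.
  pose proof (ns_norm_triangle X x (ns_opp X x)). rewrite ns_add_opp, norm_zero, norm_opp in H. lra.
Qed.

Lemma norm_sub_sym (X : NormedSpace) x y : ns_norm X (vsub X x y) = ns_norm X (vsub X y x).
Proof. replace (vsub X x y) with (ns_opp X (vsub X y x)) by veq. apply norm_opp. Qed.

Lemma norm_rev (X : NormedSpace) x y : ns_norm X x - ns_norm X y <= ns_norm X (ns_add X x y).
Proof.
  pose proof (ns_norm_triangle X (ns_add X x y) (ns_opp X y)).
  replace (ns_add X (ns_add X x y) (ns_opp X y)) with x in H by veq. rewrite norm_opp in H. lra.
Qed.

Lemma norm_sub_tri (X : NormedSpace) a b c :
  ns_norm X (vsub X a c) <= ns_norm X (vsub X a b) + ns_norm X (vsub X b c).
Proof.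
  replace (vsub X a c) with (ns_add X (vsub X a b) (vsub X b c)) by veq. apply ns_norm_triangle.
Qed.

Lemma norm_eq0_iff (X : NormedSpace) x : ns_norm X x = 0 -> x = ns_zero X.
Proof. apply ns_norm_eq0. Qed.

Inductive span (X : NormedSpace) (L : list X) : X -> Prop :=
| sp_base : forall v, In v L -> span X L v
| sp_zero : span X L (ns_zero X)
| sp_add : forall x y, span X L x -> span X L y -> span X L (ns_add X x y)
| sp_scal : forall a x, span X L x -> span X L (ns_scal X a x).

Lemma sp_opp X L x : span X L x -> span X L (ns_opp X x).
Proof. intro; rewrite v_opp_scal; apply sp_scal; auto. Qed.

Lemma sp_sub X L x y : span X L x -> span X L y -> span X L (vsub X x y).
Proof. intros; apply sp_add; auto; apply sp_opp; auto. Qed.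

Lemma span_mono (X : NormedSpace) (L L' : list X) x : (forall v, In v L -> In v L') -> span X L x -> span X L' x.
Proof. intros H Hs; induction Hs; [apply sp_base; auto|apply sp_zero|apply sp_add|apply sp_scal]; auto. Qed.

Lemma span_nil X x : span X nil x -> x = ns_zero X.
Proof.
  intro H; induction H; [destruct H| auto | subst; apply ns_add_zero | subst; apply v_scalz].
Qed.

Lemma span_cons_dec X v L x : span X (v :: L) x ->
  exists c y, span X L y /\ x = ns_add X y (ns_scal X c v).
Proof.
  intro H; induction H.
  - destruct H as [<-|H].
    + exists 1, (ns_zero X); split; [apply sp_zero| veq].
    + exists 0, v0; split; [apply sp_base; auto | veq].
  - exists 0, (ns_zero X); split; [apply sp_zero| veq].
  - destruct IHspan1 as (c1 & y1 & H1 & ->), IHspan2 as (c2 & y2 & H2 & ->).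
    exists (c1 + c2), (ns_add X y1 y2); split; [apply sp_add; auto| veq].
  - destruct IHspan as (c & y & H1 & ->).
    exists (a * c), (ns_scal X a y); split; [apply sp_scal; auto| veq].
Qed.

Lemma span_cons_comp X v L y c : span X L y -> span X (v :: L) (ns_add X y (ns_scal X c v)).
Proof.
  intro H. apply sp_add. apply (span_mono X L); simpl; auto. apply sp_scal, sp_base; simpl; auto.
Qed.

Definition closedsp (X : NormedSpace) (L : list X) : Prop :=
  forall z, (forall eps, 0 < eps -> exists y, span X L y /\ ns_norm X (vsub X z y) < eps) ->
  span X L z.

Lemma inv_small eps : 0 < eps -> exists N : nat, forall k, (N <= k)%nat -> 1 / (INR k + 1) < eps.
Proof.
  intro He. destruct (archimed (1 / eps)) as [H1 _].
  destruct (Z.le_gt_cases (up (1/eps)) 0) as [Hz|Hz].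
  - exists 0%nat. intros k _. pose proof (pos_INR k).
    assert (0 < 1/eps) by (apply Rdiv_lt_0_compat; lra). apply IZR_le in Hz. lra.
  - exists (Z.to_nat (up (1/eps))). intros k Hk.
    apply le_INR in Hk. rewrite INR_IZR_INZ, Z2Nat.id in Hk by lia.
    assert (0 < 1/eps) by (apply Rdiv_lt_0_compat; lra).
    assert (Hk1 : / eps < INR k + 1) by (unfold Rdiv in *; lra).
    unfold Rdiv; rewrite Rmult_1_l. replace eps with (/ (/ eps)) by (field; lra).
    apply Rinv_lt_contravar; auto. apply Rmult_lt_0_compat; [apply Rinv_0_lt_compat|]; lra.
Qed.

Lemma closed_span X L : closedsp X L.
Proof.
  induction L as [|v L IH]; intros z Hz.
  - assert (ns_norm X z = 0).
    { apply Rle_antisym; [|apply norm_nonneg]. apply Rnot_lt_le; intro Hp.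
      destruct (Hz _ Hp) as (y & Hy & Hn). apply span_nil in Hy; subst.
      replace (vsub X z (ns_zero X)) with z in Hn by veq. lra. }
    apply ns_norm_eq0 in H; subst; apply sp_zero.
  - destruct (classic (span X L v)) as [Hv|Hv].
    + apply (span_mono X L); [simpl; auto|]. apply IH. intros eps He.
      destruct (Hz eps He) as (y & Hy & Hn). apply span_cons_dec in Hy as (c & y' & Hy' & ->).
      exists (ns_add X y' (ns_scal X c v)); split; auto. apply sp_add; auto. apply sp_scal; auto.
    + assert (Hd : exists e0, 0 < e0 /\ forall y, span X L y -> e0 <= ns_norm X (vsub X v y)).
      { apply NNPP; intro Hn. apply Hv, IH. intros eps He. apply NNPP; intro Hn2.
        apply Hn; exists eps; split; auto. intros y Hy. apply Rnot_lt_le; intro Hl. apply Hn2; eauto. }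
      destruct Hd as (e0 & He0 & Hd).
      assert (Hlow : forall y c, span X L y -> Rabs c * e0 <= ns_norm X (ns_add X y (ns_scal X c v))).
      { intros y c Hy. destruct (Req_dec c 0) as [->|Hc].
        - rewrite Rabs_R0, Rmult_0_l; apply norm_nonneg.
        - replace (ns_add X y (ns_scal X c v)) with
            (ns_scal X c (vsub X v (ns_scal X (- / c) y))).
          + rewrite ns_norm_scal. apply Rmult_le_compat_l; [apply Rabs_pos|]. apply Hd, sp_scal; auto.
          + veq. field; auto. }
      assert (Hch : forall k : nat, {p : R * X | span X L (snd p) /\
          ns_norm X (vsub X z (ns_add X (snd p) (ns_scal X (fst p) v))) < 1 / (INR k + 1)}).
      { intro k. apply constructive_indefinite_description.
        assert (0 < 1 / (INR k + 1)) by (pose proof (pos_INR k); apply Rdiv_lt_0_compat; lra).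
        destruct (Hz _ H) as (y & Hy & Hn). apply span_cons_dec in Hy as (c & y' & Hy' & ->).
        exists (c, y'); simpl; auto. }
      set (cs := fun k => fst (proj1_sig (Hch k))).
      set (ys := fun k => snd (proj1_sig (Hch k))).
      assert (Hys : forall k, span X L (ys k)) by (intro k; unfold ys; destruct (proj2_sig (Hch k)); auto).
      assert (Hyn : forall k, ns_norm X (vsub X z (ns_add X (ys k) (ns_scal X (cs k) v))) < 1 / (INR k + 1))
        by (intro k; unfold ys, cs; destruct (proj2_sig (Hch k)); auto).
      assert (Hcau : Cauchy_crit cs).
      { intros eps He. destruct (inv_small (eps * e0 / 2)) as [N HN].
        { apply Rdiv_lt_0_compat; [apply Rmult_lt_0_compat|]; lra. }
        exists N. intros n m Hn Hm. unfold R_dist.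
        pose proof (Hlow (vsub X (ys n) (ys m)) (cs n - cs m) (sp_sub X L _ _ (Hys n) (Hys m))).
        pose proof (norm_sub_tri X (ns_add X (ys n) (ns_scal X (cs n) v)) z
                      (ns_add X (ys m) (ns_scal X (cs m) v))).
        rewrite (norm_sub_sym X _ z) in H0.
        replace (vsub X (ns_add X (ys n) (ns_scal X (cs n) v)) (ns_add X (ys m) (ns_scal X (cs m) v)))
          with (ns_add X (vsub X (ys n) (ys m)) (ns_scal X (cs n - cs m) v)) in H0 by veq.
        pose proof (Hyn n); pose proof (Hyn m). pose proof (HN n Hn); pose proof (HN m Hm).
        apply (Rmult_lt_reg_r e0); auto. lra. }
      destruct (R_complete cs Hcau) as [c Hc].
      replace z with (ns_add X (vsub X z (ns_scal X c v)) (ns_scal X c v)) by veq.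
      apply span_cons_comp. apply IH. intros eps He.
      assert (Hnv := norm_nonneg X v).
      destruct (inv_small (eps / 2)) as [N1 HN1]; [lra|].
      destruct (Hc (eps / (2 * (ns_norm X v + 1)))) as [N2 HN2].
      { apply Rdiv_lt_0_compat; lra. }
      exists (ys (max N1 N2)); split; auto.
      set (k := max N1 N2).
      replace (vsub X (vsub X z (ns_scal X c v)) (ys k)) with
        (ns_add X (vsub X z (ns_add X (ys k) (ns_scal X (cs k) v))) (ns_scal X (cs k - c) v)) by veq.
      eapply Rle_lt_trans; [apply ns_norm_triangle|]. rewrite ns_norm_scal.
      pose proof (Hyn k). pose proof (HN1 k (Nat.le_max_l _ _)). pose proof (HN2 k (Nat.le_max_r _ _)).
      unfold R_dist in H1.
      assert (Rabs (cs k - c) * ns_norm X v <= eps / (2 * (ns_norm X v + 1)) * (ns_norm X v + 1)).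
      { apply Rmult_le_compat; try apply Rabs_pos; auto; lra. }
      replace (eps / (2 * (ns_norm X v + 1)) * (ns_norm X v + 1)) with (eps / 2) in H2 by (field; lra).
      lra.
Qed.


Lemma lincomb_app (X : NormedSpace) l1 l2 : lincomb X (l1 ++ l2) = ns_add X (lincomb X l1) (lincomb X l2).
Proof. induction l1; simpl. rewrite v_add0l; auto. rewrite IHl1; veq. Qed.

Lemma lincomb_scal (X : NormedSpace) a l :
  lincomb X (map (fun p => (a * fst p, snd p)) l) = ns_scal X a (lincomb X l).
Proof. induction l; simpl. rewrite v_scalz; auto. rewrite IHl. veq. Qed.

Lemma span_lincomb (X : NormedSpace) (L : list X) x : span X L x ->
  exists lc, (forall p, In p lc -> In (snd p) L) /\ x = lincomb X lc.
Proof.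
  intro H; induction H.
  - exists ((1, v) :: nil); split. intros p [<-|[]]; auto. simpl. veq.
  - exists nil; split; simpl; tauto.
  - destruct IHspan1 as (l1 & H1 & ->), IHspan2 as (l2 & H2 & ->).
    exists (l1 ++ l2); split. intros p Hp; apply in_app_or in Hp; destruct Hp; auto.
    rewrite lincomb_app; auto.
  - destruct IHspan as (l & H1 & ->). exists (map (fun p => (a * fst p, snd p)) l); split.
    intros p Hp. apply in_map_iff in Hp as (q & <- & Hq). simpl; auto.
    rewrite lincomb_scal; auto.
Qed.

Lemma lincomb_span (X : NormedSpace) (L : list X) lc : (forall p, In p lc -> In (snd p) L) ->
  span X L (lincomb X lc).
Proof.
  induction lc as [|[a v] lc IH]; intros H; simpl. apply sp_zero.
  apply sp_add. apply sp_scal, sp_base. apply (H (a, v)); simpl; auto.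
  apply IH; intros; apply H; simpl; auto.
Qed.

Lemma exists_out (X : NormedSpace) : infinite_dimensional X -> forall L, exists z, ~ span X L z.
Proof.
  intros Hinf L. apply NNPP; intro Hn. apply Hinf. exists L. intro x.
  apply span_lincomb. apply NNPP; intro Hx. apply Hn; eauto.
Qed.

Lemma riesz_ex (X : NormedSpace) : infinite_dimensional X -> forall L, exists e,
  ns_norm X e = 1 /\ forall y, span X L y -> 1/2 <= ns_norm X (vsub X e y).
Proof.
  intros Hinf L. destruct (exists_out X Hinf L) as [z Hz].
  assert (Hd : exists e0, 0 < e0 /\ forall y, span X L y -> e0 <= ns_norm X (vsub X z y)).
  { apply NNPP; intro Hn. apply Hz, closed_span. intros eps He. apply NNPP; intro Hn2.
    apply Hn; exists eps; split; auto. intros y Hy. apply Rnot_lt_le; intro Hl. apply Hn2; eauto. }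
  destruct Hd as (e0 & He0 & Hd).
  set (A := fun e => forall y, span X L y -> e <= ns_norm X (vsub X z y)).
  destruct (completeness A) as [d [Hub Hlub]].
  { exists (ns_norm X (vsub X z (ns_zero X))). intros e He. apply He, sp_zero. }
  { exists e0; exact Hd. }
  assert (Hd0 : e0 <= d) by (apply Hub; exact Hd).
  assert (HdA : A d) by (intros y Hy; apply Hlub; intros e He; apply He; auto).
  assert (Hy0 : exists y0, span X L y0 /\ ns_norm X (vsub X z y0) < 2 * d).
  { apply NNPP; intro Hn. assert (A (2 * d)).
    { intros y Hy. apply Rnot_lt_le; intro Hl; apply Hn; eauto. }
    apply Hub in H. lra. }
  destruct Hy0 as (y0 & Hy0 & Hn).
  set (rho := ns_norm X (vsub X z y0)).
  assert (Hrho : d <= rho) by (apply HdA; auto).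
  exists (ns_scal X (/ rho) (vsub X z y0)). split.
  - rewrite ns_norm_scal, Rabs_right. fold rho. field; lra.
    apply Rle_ge, Rlt_le, Rinv_0_lt_compat; lra.
  - intros y Hy.
    replace (vsub X (ns_scal X (/ rho) (vsub X z y0)) y) with
      (ns_scal X (/ rho) (vsub X z (ns_add X y0 (ns_scal X rho y)))).
    + rewrite ns_norm_scal, Rabs_right by (apply Rle_ge, Rlt_le, Rinv_0_lt_compat; lra).
      assert (d <= ns_norm X (vsub X z (ns_add X y0 (ns_scal X rho y)))).
      { apply HdA. apply sp_add; auto. apply sp_scal; auto. }
      apply (Rmult_le_reg_l rho). lra. rewrite <- Rmult_assoc, Rinv_r, Rmult_1_l by lra. unfold rho in *. lra.
    + veq. field. lra.
Qed.

Lemma riesz_form (X : NormedSpace) (L : list X) e y c :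
  (forall y, span X L y -> 1/2 <= ns_norm X (vsub X e y)) -> span X L y ->
  Rabs c / 2 <= ns_norm X (ns_add X y (ns_scal X c e)).
Proof.
  intros He Hy. destruct (Req_dec c 0) as [->|Hc].
  - rewrite Rabs_R0. pose proof (norm_nonneg X (ns_add X y (ns_scal X 0 e))). lra.
  - replace (ns_add X y (ns_scal X c e)) with (ns_scal X c (vsub X e (ns_scal X (- / c) y))).
    + rewrite ns_norm_scal. pose proof (He _ (sp_scal X L (- / c) y Hy)).
      pose proof (Rabs_pos c). nra.
    + veq. field; auto.
Qed.


Lemma least_nat (P : nat -> Prop) n : P n -> exists m, P m /\ forall k, P k -> (m <= k)%nat.
Proof.
  intro Hn. apply NNPP; intro H.
  assert (forall n, forall k, (k <= n)%nat -> ~ P k).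
  { induction n0; intros k Hk HP.
    - apply H; exists k; split; auto; intros; lia.
    - destruct (Nat.eq_dec k (S n0)) as [->|Hne]; [|apply (IHn0 k); auto; lia].
      apply H; exists (S n0); split; auto. intros k' Hk'. destruct (Compare_dec.le_lt_dec (S n0) k'); auto.
      exfalso; apply (IHn0 k'); auto; lia. }
  apply (H0 n n); auto.
Qed.

Lemma gdist_spec {V : Type} (adj : V -> V -> Prop) u v : connected adj ->
  walk adj u v (gdist adj u v) /\ forall m, walk adj u v m -> (gdist adj u v <= m)%nat.
Proof.
  intro Hc. unfold gdist. apply epsilon_spec. destruct (Hc u v) as [n Hn].
  apply (least_nat (fun n => walk adj u v n) n Hn).
Qed.

Lemma gdist_edge {V : Type} (adj : V -> V -> Prop) a b : simple_graph adj -> connected adj ->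
  adj a b -> gdistR adj a b = 1.
Proof.
  intros [_ Hirr] Hc Hab. unfold gdistR. destruct (gdist_spec adj a b Hc) as [Hw Hm].
  assert (H1 : (gdist adj a b <= 1)%nat) by (apply Hm; econstructor; eauto; constructor).
  destruct (gdist adj a b) as [|[|n]] eqn:E.
  - inversion Hw; subst. exfalso; eapply Hirr; eauto.
  - reflexivity.
  - lia.
Qed.

Lemma lower_same (Z : NormedSpace) (L : list Z) x0 e mu lam :
  span Z L x0 -> 1 <= ns_norm Z x0 ->
  (forall y, span Z L y -> 1/2 <= ns_norm Z (vsub Z e y)) -> ns_norm Z e = 1 ->
  Rabs lam <= Rabs mu ->
  Rabs mu <= 3 * ns_norm Z (ns_add Z (ns_scal Z mu x0) (ns_scal Z lam e)).
Proof.
  intros Hx Hx1 He Hn1 Hl.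
  pose proof (riesz_form Z L e (ns_scal Z mu x0) lam He (sp_scal Z L mu x0 Hx)).
  pose proof (norm_rev Z (ns_scal Z mu x0) (ns_scal Z lam e)).
  rewrite !ns_norm_scal, Hn1 in H0. pose proof (Rabs_pos mu). nra.
Qed.

Lemma lower_diff (Z : NormedSpace) (Lm Ln : list Z) x em en c1 c2 :
  (forall v, In v Lm -> In v Ln) -> In em Ln ->
  (forall y, span Z Lm y -> 1/2 <= ns_norm Z (vsub Z em y)) ->
  (forall y, span Z Ln y -> 1/2 <= ns_norm Z (vsub Z en y)) ->
  ns_norm Z en = 1 -> span Z Lm x -> 0 <= c1 -> 0 <= c2 ->
  Rmax c1 c2 <= 6 * ns_norm Z (vsub Z (ns_add Z x (ns_scal Z c1 em)) (ns_scal Z c2 en)).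
Proof.
  intros Hsub Hin Hm Hn Hn1 Hx H1 H2.
  assert (Hs : span Z Ln (ns_add Z x (ns_scal Z c1 em))).
  { apply sp_add. apply (span_mono Z Lm); auto. apply sp_scal, sp_base; auto. }
  pose proof (riesz_form Z Ln en _ (- c2) Hn Hs).
  replace (ns_add Z (ns_add Z x (ns_scal Z c1 em)) (ns_scal Z (- c2) en)) with
    (vsub Z (ns_add Z x (ns_scal Z c1 em)) (ns_scal Z c2 en)) in H by veq.
  pose proof (riesz_form Z Lm em x c1 Hm Hx).
  pose proof (norm_rev Z (ns_add Z x (ns_scal Z c1 em)) (ns_opp Z (ns_scal Z c2 en))).
  rewrite norm_opp in H3.
  rewrite ns_norm_scal, Hn1 in H3. rewrite Rabs_Ropp in H.
  rewrite !Rabs_right in * by lra.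
  unfold Rmax; destruct (Rle_dec c1 c2). lra. lra.
Qed.


Definition phi (s : R) : R := Rmin s (1 - s).

Lemma phi_bounds s : 0 <= s <= 1 -> 0 <= phi s /\ phi s <= s /\ phi s <= 1 - s.
Proof. intros; unfold phi, Rmin; destruct (Rle_dec s (1 - s)); lra. Qed.

Lemma phi_lip s t : Rabs (phi s - phi t) <= Rabs (s - t).
Proof.
  unfold phi, Rmin; destruct (Rle_dec s (1 - s)), (Rle_dec t (1 - t));
  unfold Rabs; repeat destruct Rcase_abs; lra.
Qed.

Lemma phi_sym t : phi (1 - t) = phi t.
Proof. unfold phi, Rmin; destruct (Rle_dec (1 - t) (1 - (1 - t))), (Rle_dec t (1 - t)); lra. Qed.

Lemma Rmin4_cases a b c d : Rmin4 a b c d = a \/ Rmin4 a b c d = b \/ Rmin4 a b c d = c \/ Rmin4 a b c d = d.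
Proof. unfold Rmin4, Rmin; repeat destruct Rle_dec; tauto. Qed.

Lemma Rmin4_le a b c d : Rmin4 a b c d <= a /\ Rmin4 a b c d <= b /\ Rmin4 a b c d <= c /\ Rmin4 a b c d <= d.
Proof. unfold Rmin4, Rmin; repeat destruct Rle_dec; lra. Qed.

Definition fpt {V : Type} (Z : NormedSpace) (w : V -> Z) (E : V -> V -> Z) (a b : V) (s : R) : Z :=
  ns_add Z (ns_add Z (w a) (ns_scal Z s (vsub Z (w b) (w a)))) (ns_scal Z (phi s) (E a b)).

Definition fT {V : Type} (adj : V -> V -> Prop) (Z : NormedSpace) (w : V -> Z) (E : V -> V -> Z)
  (p : TPoint adj) : Z := fpt Z w E (tp_a p) (tp_b p) (tp_t p).

Lemma core {V : Type} (adj : V -> V -> Prop) (Z : NormedSpace) (base : list Z)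
  (w : V -> Z) (E : V -> V -> Z) (D : R) :
  1 <= D ->
  (forall u v, gdistR adj u v <= ns_dist Z (w u) (w v) <= D * gdistR adj u v) ->
  (forall a b, adj a b -> gdistR adj a b = 1) -> (forall a b, adj a b -> adj b a) ->
  (forall v, span Z base (w v)) ->
  (forall a b, E a b = E b a) -> (forall a b, ns_norm Z (E a b) = 1) ->
  (forall a b x mu lam, span Z base x -> 1 <= ns_norm Z x -> Rabs lam <= Rabs mu ->
      Rabs mu <= 3 * ns_norm Z (ns_add Z (ns_scal Z mu x) (ns_scal Z lam (E a b)))) ->
  (forall a b c d, ~ (a = c /\ b = d) -> ~ (a = d /\ b = c) -> forall x c1 c2,
      span Z base x -> 0 <= c1 -> 0 <= c2 ->
      Rmax c1 c2 <= 6 * ns_norm Z (vsub Z (ns_add Z x (ns_scal Z c1 (E a b))) (ns_scal Z c2 (E c d)))) ->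
  forall p q : TPoint adj,
    tdist adj p q <= (12 * D + 25) * ns_dist Z (fT adj Z w E p) (fT adj Z w E q) /\
    ns_dist Z (fT adj Z w E p) (fT adj Z w E q) <= (D + 1) * tdist adj p q.
Proof.
  intros HD Hw Hedge Hsymadj Hsp HEs HEn Hsame Hdiff.
  assert (Hgd : forall u v, 0 <= gdistR adj u v) by (intros; apply pos_INR).
  assert (Hedgew : forall a b, adj a b -> ns_norm Z (vsub Z (w b) (w a)) <= D /\ 1 <= ns_norm Z (vsub Z (w b) (w a))).
  { intros a b Hab. pose proof (Hw b a). rewrite (Hedge b a (Hsymadj _ _ Hab)) in H.
    unfold ns_dist in H. lra. }
  assert (UPa : forall a b s, adj a b -> 0 <= s <= 1 ->
            ns_norm Z (vsub Z (fpt Z w E a b s) (w a)) <= (D + 1) * s).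
  { intros a b s Hab Hs. unfold fpt.
    replace (vsub Z (ns_add Z (ns_add Z (w a) (ns_scal Z s (vsub Z (w b) (w a)))) (ns_scal Z (phi s) (E a b))) (w a))
      with (ns_add Z (ns_scal Z s (vsub Z (w b) (w a))) (ns_scal Z (phi s) (E a b))) by veq.
    eapply Rle_trans; [apply ns_norm_triangle|]. rewrite !ns_norm_scal, HEn.
    destruct (Hedgew a b Hab). destruct (phi_bounds s Hs) as (? & ? & ?).
    rewrite !Rabs_right by lra. nra. }
  assert (UPb : forall a b s, adj a b -> 0 <= s <= 1 ->
            ns_norm Z (vsub Z (fpt Z w E a b s) (w b)) <= (D + 1) * (1 - s)).
  { intros a b s Hab Hs. unfold fpt.
    replace (vsub Z (ns_add Z (ns_add Z (w a) (ns_scal Z s (vsub Z (w b) (w a)))) (ns_scal Z (phi s) (E a b))) (w b))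
      with (ns_add Z (ns_scal Z (-(1 - s)) (vsub Z (w b) (w a))) (ns_scal Z (phi s) (E a b))) by veq.
    eapply Rle_trans; [apply ns_norm_triangle|]. rewrite !ns_norm_scal, HEn.
    destruct (Hedgew a b Hab). destruct (phi_bounds s Hs) as (? & ? & ?).
    rewrite Rabs_Ropp, !Rabs_right by lra. nra. }
  assert (UPterm : forall P Q x y al be, ns_norm Z (vsub Z P (w x)) <= (D + 1) * al ->
            ns_norm Z (vsub Z Q (w y)) <= (D + 1) * be ->
            ns_norm Z (vsub Z P Q) <= (D + 1) * (al + gdistR adj x y + be)).
  { intros P Q x y al be H1 H2.
    pose proof (norm_sub_tri Z P (w x) Q). pose proof (norm_sub_tri Z (w x) (w y) Q).
    rewrite (norm_sub_sym Z (w y) Q) in H0. destruct (Hw x y). unfold ns_dist in *.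
    pose proof (Hgd x y). nra. }
  intros p q.
  destruct p as [a b Hab s Hs]; destruct q as [c d Hcd t Ht].
  unfold fT, tdist, ns_dist; simpl.
  set (P := fpt Z w E a b s). set (Q := fpt Z w E c d t).
  set (via := Rmin4 (s + gdistR adj a c + t) (s + gdistR adj a d + (1 - t))
                    (1 - s + gdistR adj b c + t) (1 - s + gdistR adj b d + (1 - t))).
  assert (Hvia : ns_norm Z (vsub Z P Q) <= (D + 1) * via).
  { destruct (Rmin4_cases (s + gdistR adj a c + t) (s + gdistR adj a d + (1 - t))
                    (1 - s + gdistR adj b c + t) (1 - s + gdistR adj b d + (1 - t))) as [E1|[E1|[E1|E1]]];
    unfold via; rewrite E1; apply UPterm; unfold P, Q; first [apply UPa | apply UPb]; auto. }
  assert (HN0 := norm_nonneg Z (vsub Z P Q)).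
  destruct (excluded_middle_informative (a = c /\ b = d)) as [[<- <-]|Hn1].
  -
    assert (HPQ : vsub Z P Q = ns_add Z (ns_scal Z (s - t) (vsub Z (w b) (w a)))
                                 (ns_scal Z (phi s - phi t) (E a b))) by (unfold P, Q, fpt; veq).
    split.
    + eapply Rle_trans; [apply Rmin_r|].
      pose proof (Hsame a b (vsub Z (w b) (w a)) (s - t) (phi s - phi t)
          (sp_sub Z base _ _ (Hsp b) (Hsp a)) (proj2 (Hedgew a b Hab)) (phi_lip s t)).
      rewrite <- HPQ in H. nra.
    + unfold Rmin; destruct (Rle_dec via (Rabs (s - t))); auto.
      rewrite HPQ. eapply Rle_trans; [apply ns_norm_triangle|]. rewrite !ns_norm_scal, HEn.
      destruct (Hedgew a b Hab). pose proof (phi_lip s t). pose proof (Rabs_pos (s - t)). nra.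
  - destruct (excluded_middle_informative (a = d /\ b = c)) as [[<- <-]|Hn2].
    + assert (HPQ : vsub Z P Q = ns_add Z (ns_scal Z (s - (1 - t)) (vsub Z (w b) (w a)))
                                 (ns_scal Z (phi s - phi (1 - t)) (E a b))).
      { unfold P, Q, fpt. rewrite phi_sym, (HEs b a). veq. }
      split.
      * eapply Rle_trans; [apply Rmin_r|].
        pose proof (Hsame a b (vsub Z (w b) (w a)) (s - (1 - t)) (phi s - phi (1 - t))
          (sp_sub Z base _ _ (Hsp b) (Hsp a)) (proj2 (Hedgew a b Hab)) (phi_lip s (1 - t))).
        rewrite <- HPQ in H. nra.
      * unfold Rmin; destruct (Rle_dec via (Rabs (s - (1 - t)))); auto.
        rewrite HPQ. eapply Rle_trans; [apply ns_norm_triangle|]. rewrite !ns_norm_scal, HEn.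
        destruct (Hedgew a b Hab). pose proof (phi_lip s (1 - t)). pose proof (Rabs_pos (s - (1 - t))). nra.
    + split; [|exact Hvia].
      set (P0 := ns_add Z (w a) (ns_scal Z s (vsub Z (w b) (w a)))).
      set (Q0 := ns_add Z (w c) (ns_scal Z t (vsub Z (w d) (w c)))).
      assert (HPQ : vsub Z P Q = vsub Z (ns_add Z (vsub Z P0 Q0) (ns_scal Z (phi s) (E a b)))
                                        (ns_scal Z (phi t) (E c d))) by (unfold P, Q, P0, Q0, fpt; veq).
      assert (Hx : span Z base (vsub Z P0 Q0)).
      { unfold P0, Q0; repeat first [apply sp_add | apply sp_scal | apply sp_opp | apply Hsp]. }
      destruct (phi_bounds s Hs) as (Hs0 & Hs1 & Hs2). destruct (phi_bounds t Ht) as (Ht0 & Ht1 & Ht2).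
      pose proof (Hdiff a b c d Hn1 Hn2 _ _ _ Hx Hs0 Ht0) as Hm. rewrite <- HPQ in Hm.
      pose proof (Rmax_l (phi s) (phi t)). pose proof (Rmax_r (phi s) (phi t)).
      assert (HX : ns_norm Z (vsub Z P0 Q0) <= ns_norm Z (vsub Z P Q) + phi s + phi t).
      { rewrite HPQ. pose proof (norm_rev Z (ns_add Z (vsub Z P0 Q0) (ns_scal Z (phi s) (E a b)))
            (ns_opp Z (ns_scal Z (phi t) (E c d)))). rewrite norm_opp, ns_norm_scal, HEn in H1.
        pose proof (norm_rev Z (vsub Z P0 Q0) (ns_scal Z (phi s) (E a b))).
        rewrite ns_norm_scal, HEn in H2. rewrite !Rabs_right in * by lra. lra. }
      assert (HP0 : exists x, ns_norm Z (vsub Z P0 (w x)) <= D * phi s /\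
                 (x = a /\ phi s = s \/ x = b /\ phi s = 1 - s)).
      { destruct (Hedgew a b Hab). unfold phi, Rmin; destruct (Rle_dec s (1 - s)).
        - exists a; split; [|auto]. unfold P0.
          replace (vsub Z (ns_add Z (w a) (ns_scal Z s (vsub Z (w b) (w a)))) (w a))
            with (ns_scal Z s (vsub Z (w b) (w a))) by veq.
          rewrite ns_norm_scal, Rabs_right by lra. nra.
        - exists b; split; [|auto]. unfold P0.
          replace (vsub Z (ns_add Z (w a) (ns_scal Z s (vsub Z (w b) (w a)))) (w b))
            with (ns_scal Z (-(1 - s)) (vsub Z (w b) (w a))) by veq.
          rewrite ns_norm_scal, Rabs_Ropp, Rabs_right by lra. nra. }
      assert (HQ0 : exists y, ns_norm Z (vsub Z Q0 (w y)) <= D * phi t /\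
                 (y = c /\ phi t = t \/ y = d /\ phi t = 1 - t)).
      { destruct (Hedgew c d Hcd). unfold phi, Rmin; destruct (Rle_dec t (1 - t)).
        - exists c; split; [|auto]. unfold Q0.
          replace (vsub Z (ns_add Z (w c) (ns_scal Z t (vsub Z (w d) (w c)))) (w c))
            with (ns_scal Z t (vsub Z (w d) (w c))) by veq.
          rewrite ns_norm_scal, Rabs_right by lra. nra.
        - exists d; split; [|auto]. unfold Q0.
          replace (vsub Z (ns_add Z (w c) (ns_scal Z t (vsub Z (w d) (w c)))) (w d))
            with (ns_scal Z (-(1 - t)) (vsub Z (w d) (w c))) by veq.
          rewrite ns_norm_scal, Rabs_Ropp, Rabs_right by lra. nra. }
      destruct HP0 as (x & Hx1 & Hx2). destruct HQ0 as (y & Hy1 & Hy2).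
      assert (Hvx : via <= phi s + gdistR adj x y + phi t).
      { destruct (Rmin4_le (s + gdistR adj a c + t) (s + gdistR adj a d + (1 - t))
                    (1 - s + gdistR adj b c + t) (1 - s + gdistR adj b d + (1 - t))) as (? & ? & ? & ?).
        unfold via. destruct Hx2 as [[-> ->]|[-> ->]], Hy2 as [[-> ->]|[-> ->]]; lra. }
      assert (Hgxy : gdistR adj x y <= ns_norm Z (vsub Z P0 Q0) + D * phi s + D * phi t).
      { destruct (Hw x y) as [Hl _]. unfold ns_dist in Hl.
        pose proof (norm_sub_tri Z (w x) P0 (w y)). pose proof (norm_sub_tri Z P0 Q0 (w y)).
        rewrite (norm_sub_sym Z (w x) P0) in H1. lra. }
      assert (Hmm : phi s + phi t <= 12 * ns_norm Z (vsub Z P Q)) by lra.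
      assert (D * (phi s + phi t) <= D * (12 * ns_norm Z (vsub Z P Q))) by (apply Rmult_le_compat_l; lra).
      nra.
Qed.


Definition pidx (i j : nat) : nat := (Nat.max i j * Nat.max i j + Nat.min i j)%nat.

Lemma pidx_sym i j : pidx i j = pidx j i.
Proof. unfold pidx; rewrite Nat.max_comm, Nat.min_comm; auto. Qed.

Lemma pidx_inj i j i' j' : pidx i j = pidx i' j' -> (i = i' /\ j = j') \/ (i = j' /\ j = i').
Proof.
  unfold pidx; intro H.
  assert (HM : Nat.max i j = Nat.max i' j').
  { destruct (Nat.lt_trichotomy (Nat.max i j) (Nat.max i' j')) as [Hl|[Hl|Hl]]; auto; exfalso.
    - assert (S (Nat.max i j) * S (Nat.max i j) <= Nat.max i' j' * Nat.max i' j')%nat by (apply Nat.mul_le_mono; lia).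
      lia.
    - assert (S (Nat.max i' j') * S (Nat.max i' j') <= Nat.max i j * Nat.max i j)%nat by (apply Nat.mul_le_mono; lia).
      lia. }
  rewrite HM in H. assert (Nat.min i j = Nat.min i' j') by lia. lia.
Qed.

Definition gidx {V : Type} (l : list V) (v : V) : nat :=
  epsilon (inhabits 0%nat) (fun n => nth_error l n = Some v).

Lemma gidx_spec {V : Type} (l : list V) v : In v l -> nth_error l (gidx l v) = Some v.
Proof. intro H. unfold gidx. apply epsilon_spec. apply In_nth_error; auto. Qed.

Lemma gidx_inj {V : Type} (l : list V) u v : In u l -> In v l -> gidx l u = gidx l v -> u = v.
Proof.
  intros Hu Hv He. pose proof (gidx_spec l u Hu). pose proof (gidx_spec l v Hv).
  rewrite He, H0 in H. congruence.
Qed.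

Definition rz (Z : NormedSpace) (L : list Z) : Z :=
  epsilon (inhabits (ns_zero Z))
    (fun e => ns_norm Z e = 1 /\ forall y, span Z L y -> 1/2 <= ns_norm Z (vsub Z e y)).

Lemma rz_spec (Z : NormedSpace) L : infinite_dimensional Z ->
  ns_norm Z (rz Z L) = 1 /\ forall y, span Z L y -> 1/2 <= ns_norm Z (vsub Z (rz Z L) y).
Proof. intro H. unfold rz. apply epsilon_spec. apply riesz_ex; auto. Qed.

Fixpoint es (Z : NormedSpace) (base : list Z) (n : nat) : list Z :=
  match n with O => base | S n => rz Z (es Z base n) :: es Z base n end.

Definition ev (Z : NormedSpace) (base : list Z) (n : nat) : Z := rz Z (es Z base n).

Lemma es_mono (Z : NormedSpace) base m n v : (m <= n)%nat -> In v (es Z base m) -> In v (es Z base n).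
Proof. intros Hmn; induction Hmn; simpl; auto. Qed.

Lemma ev_in (Z : NormedSpace) base m n : (m < n)%nat -> In (ev Z base m) (es Z base n).
Proof. intro H. apply (es_mono Z base (S m)); [lia|]. simpl; auto. Qed.


Theorem lemma2p11 :
  exists F : R -> R, (forall x, 1 <= x -> 1 <= F x) /\
    forall (V : Type) (adj : V -> V -> Prop),
      finite_type V -> simple_graph adj -> connected adj ->
      forall (X : NormedSpace) (tau : V -> X) (D : R),
        Banach X -> finite_dimensional X -> 1 <= D ->
        has_distortion (gdistR adj) (ns_dist X) tau D ->
        forall Z : NormedSpace,
          Banach Z -> infinite_dimensional Z -> is_subspace_of X Z ->
          exists f : TPoint adj -> Z,
            distortion_le (tdist adj) (ns_dist Z) f (F D).
Proof.
  exists (fun x => (x + 1) * (12 * x + 25)). split; [intros; nra|].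
  intros V adj [l Hl] Hsimp Hconn X tau D _ [BX HBX] HD [[r [Hr Htau]] _] Z _ Hinf [j [Hja [Hjs Hjn]]].
  set (base := map j BX).
  assert (Hj0 : j (ns_zero X) = ns_zero Z).
  { rewrite <- (v_scalz X 0), Hjs, v_scal0; auto. }
  assert (Hjsub : forall x y, j (vsub X x y) = vsub Z (j x) (j y)).
  { intros. rewrite Hja, v_opp_scal, Hjs, <- v_opp_scal; auto. }
  assert (Hjspan : forall x, span Z base (j x)).
  { intro x. destruct (HBX x) as (lc & Hlc & ->). induction lc as [|[a v] lc IH]; simpl.
    - rewrite Hj0; apply sp_zero.
    - rewrite Hja, Hjs. apply sp_add. apply sp_scal, sp_base. unfold base; apply in_map.
      apply (Hlc (a, v)); simpl; auto. apply IH; intros; apply Hlc; simpl; auto. }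
  set (w := fun v => ns_scal Z (/ r) (j (tau v))).
  assert (Hw : forall u v, gdistR adj u v <= ns_dist Z (w u) (w v) <= D * gdistR adj u v).
  { intros u v. assert (Hrw : ns_dist Z (w u) (w v) = / r * ns_dist X (tau u) (tau v)).
    { unfold ns_dist, w.
      replace (vsub Z (ns_scal Z (/ r) (j (tau u))) (ns_scal Z (/ r) (j (tau v))))
        with (ns_scal Z (/ r) (vsub Z (j (tau u)) (j (tau v)))) by veq.
      rewrite <- Hjsub, ns_norm_scal, Hjn, Rabs_right; auto.
      apply Rle_ge, Rlt_le, Rinv_0_lt_compat; auto. }
    rewrite Hrw. destruct (Htau u v). split.
    - apply (Rmult_le_reg_l r); auto. rewrite <- Rmult_assoc, Rinv_r, Rmult_1_l by lra. auto.
    - apply (Rmult_le_reg_l r); auto. rewrite <- Rmult_assoc, Rinv_r, Rmult_1_l by lra. lra. }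
  set (E := fun a b => ev Z base (pidx (gidx l a) (gidx l b))).
  assert (Hbase : forall n v, In v base -> In v (es Z base n)) by (intros n v Hv; apply (es_mono Z base 0 n v); [lia|exact Hv]).
  assert (Hbsp : forall n x, span Z base x -> span Z (es Z base n) x) by (intros n x Hx; apply (span_mono Z base); [apply Hbase|exact Hx]).
  assert (Hevn : forall n, ns_norm Z (ev Z base n) = 1) by (intro; apply rz_spec; auto).
  assert (Hevr : forall n y, span Z (es Z base n) y -> 1/2 <= ns_norm Z (vsub Z (ev Z base n) y))
    by (intro; apply rz_spec; auto).
  assert (Hdiffn : forall m n x c1 c2, m <> n -> span Z base x -> 0 <= c1 -> 0 <= c2 ->
      Rmax c1 c2 <= 6 * ns_norm Z (vsub Z (ns_add Z x (ns_scal Z c1 (ev Z base m))) (ns_scal Z c2 (ev Z base n)))).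
  { intros m n x c1 c2 Hmn Hx H1 H2. destruct (Nat.lt_total m n) as [Hlt|[Hlt|Hlt]].
    - apply (lower_diff Z (es Z base m) (es Z base n)); auto.
      + intros; apply (es_mono Z base m); auto; lia.
      + apply ev_in; auto.
    - lia.
    - replace (vsub Z (ns_add Z x (ns_scal Z c1 (ev Z base m))) (ns_scal Z c2 (ev Z base n))) with
        (ns_opp Z (vsub Z (ns_add Z (ns_opp Z x) (ns_scal Z c2 (ev Z base n))) (ns_scal Z c1 (ev Z base m))))
        by veq.
      rewrite norm_opp, Rmax_comm. apply (lower_diff Z (es Z base n) (es Z base m)); auto.
      + intros; apply (es_mono Z base n); auto; lia.
      + apply ev_in; auto.
      + apply sp_opp; auto. }
  assert (Hc1 : forall p q : TPoint adj,
    tdist adj p q <= (12 * D + 25) * ns_dist Z (fT adj Z w E p) (fT adj Z w E q) /\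
    ns_dist Z (fT adj Z w E p) (fT adj Z w E q) <= (D + 1) * tdist adj p q).
  { apply (core adj Z base w E D HD Hw
     (fun a b Hab => gdist_edge adj a b Hsimp Hconn Hab) (proj1 Hsimp)
     (fun v => sp_scal Z base _ _ (Hjspan (tau v)))).
  - intros a b; unfold E; rewrite pidx_sym; auto.
  - intros a b; apply Hevn.
  - intros a b x mu lam Hx Hx1 Hl2. apply (lower_same Z (es Z base (pidx (gidx l a) (gidx l b)))); [apply Hbsp; auto|auto|apply Hevr|apply Hevn|auto].
  - intros a b c d Hn1 Hn2 x c1 c2 Hx H1 H2. apply Hdiffn; auto.
    intro Heq. apply pidx_inj in Heq.
    destruct Heq as [[Ha Hb]|[Ha Hb]]; apply gidx_inj in Ha; auto; apply gidx_inj in Hb; auto. }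
  { exists (fT adj Z w E). exists (/ (12 * D + 25)). split.
    + apply Rinv_0_lt_compat; lra.
    + intros p q. destruct (Hc1 p q) as [H1 H2]. split.
      * apply (Rmult_le_reg_l (12 * D + 25)); [lra|]. rewrite <- Rmult_assoc, Rinv_r, Rmult_1_l by lra. auto.
      * replace (/ (12 * D + 25) * ((D + 1) * (12 * D + 25))) with (D + 1) by (field; lra). auto. }
Qed.
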